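(* Let $\Gamma$ be a locally finite weighted graph and let $X$ be a finite subset of its vertex set. Then the following are equivalent: (1) $\Delta(\mathbb{R}^\Gamma_{\Gamma\setminus X})=\Delta(\mathbb{R}^\Gamma)$; (2) every function $f:X\to\mathbb{R}$ extends to a harmonic function on all of $\Gamma$.
   Context: Weighted graph: undirected, no loops or multiple edges, weights $\omega_{xy}=\omega_{yx}>0$, $\deg x=\sum_{y\sim x}\omega_{xy}$. Laplacian: $\Delta f(x)=f(x)-\frac{1}{\deg x}\sum_{y\sim x}\omega_{xy}f(y)$ for $f\in\mathbb{R}^\Gamma$. For a set $Y$ of vertices, $\mathbb{R}^\Gamma_Y$ denotes the space of functions $\Gamma\to\mathbb{R}$ supported on $Y$. A function is harmonic if $\Delta f\equiv 0$. *)

(* Defs.v *)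
From HB Require Import structures.
From mathcomp Require Import all_boot all_order all_algebra.
From mathcomp Require Import classical_sets reals.
Set Implicit Arguments. Unset Strict Implicit. Unset Printing Implicit Defensive.
Import Order.TTheory GRing.Theory Num.Theory.
Local Open Scope ring_scope.

(* A locally finite weighted graph on a (possibly infinite) vertex type V:
   N x is the (finite, duplicate-free) list of neighbours of x, and
   w : V -> V -> R gives the edge weights (values on non-edges are irrelevant). *)
Definition lf_wgraph (R : realType) (V : eqType) (N : V -> seq V)
    (w : V -> V -> R) : Prop :=
  [/\ forall x, uniq (N x),
      forall x, x \notin N x,
      forall x y, (y \in N x) = (x \in N y),
      forall x y, w x y = w y x
    & forall x y, y \in N x -> 0 < w x y].

Definition wdeg (R : realType) (V : eqType) (N : V -> seq V)
    (w : V -> V -> R) (x : V) : R :=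
  \sum_(y <- N x) w x y.

Definition Lap (R : realType) (V : eqType) (N : V -> seq V)
    (w : V -> V -> R) (f : V -> R) : V -> R :=
  fun x => f x - (wdeg N w x)^-1 * \sum_(y <- N x) w x y * f y.

Definition harmonic (R : realType) (V : eqType) (N : V -> seq V)
    (w : V -> V -> R) (f : V -> R) : Prop :=
  forall x, Lap N w f x = 0.

Definition supported_off (R : realType) (V : eqType) (X : seq V) :
    set (V -> R) :=
  [set f | forall x, x \in X -> f x = 0].

(* Main.v *)
Require Import Defs.
From HB Require Import structures.
From mathcomp Require Import all_boot all_order all_algebra.
From mathcomp Require Import classical_sets reals boolp ring.
Import Order.TTheory GRing.Theory Num.Theory.
Local Open Scope ring_scope.
Local Open Scope classical_set_scope.

Lemma LapB (R : realType) (V : eqType) (N : V -> seq V)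
    (w : V -> V -> R) (f g : V -> R) x :
  Lap N w (fun y => f y - g y) x = Lap N w f x - Lap N w g x.
Proof.
rewrite /Lap.
have -> : \sum_(y <- N x) w x y * (f y - g y) =
  \sum_(y <- N x) w x y * f y - \sum_(y <- N x) w x y * g y.
  by rewrite -sumrB; apply: eq_bigr => y _; rewrite mulrBr.
rewrite mulrBr; ring.
Qed.

Theorem lemma5p3 (R : realType) (V : eqType) (N : V -> seq V)
    (w : V -> V -> R) (X : seq V) :
  lf_wgraph N w ->
  (Lap N w @` @supported_off R V X = Lap N w @` [set: V -> R] <->
   forall f : {x : V | x \in X} -> R,
     exists h : V -> R, harmonic N w h /\ forall x, h (val x) = f x).
Proof.
move=> _; split.
- move=> E f.
  pose g := fun x : V => if @insub V (fun x => x \in X) {x : V | x \in X} x is Some y then f y else 0.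
  have : (Lap N w @` @supported_off R V X) (Lap N w g) by rewrite E; exists g.
  case=> u Hu Hl.
  exists (fun y => g y - u y); split.
    by move=> x; rewrite LapB Hl subrr.
  move=> x; rewrite Hu ?subr0; last exact: valP.
  by rewrite /g valK.
- move=> H; apply/seteqP; split.
    by move=> _ [u _ <-]; exists u.
  move=> _ [g _ <-].
  have [h [Hh Hx]] := H (fun x => g (val x)).
  exists (fun y => g y - h y).
    move=> x xX; have := Hx (exist _ x xX) => /= ->; exact: subrr.
  apply: funext => x; by rewrite LapB Hh subr0.
Qed.
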